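(* Let $G$ be a finite group, $X$ a $G$-homogeneous space, and $Q_1,\dots,Q_m$ probability distributions on $G$. For a word $w=w_1\cdots w_N$ with $w_i\in\{1,\dots,m\}$ let $Q^{(w)}:=Q_{w_1}\ast\cdots\ast Q_{w_N}$ and $q^{(w)}:=\sum_{g\in G}Q^{(w)}(g)e_g\in\mathbb{C}G$. Then \[\lim_{N\rightarrow \infty} \left(\max_{x_0\in X,\ w:|w|=N}\|q^{(w)}\cdot e_{x_0} -\overline{u}\|_{\rm TV}\right)^{\frac{1}{N}}=\overline{\omega}_X\left(Q_1,\dots, Q_m\right),\] where the maximum is over all words $w$ of length $N$ and all $x_0\in X$. Furthermore, $\{Q_1,\dots,Q_m\}$ has the adversarial mixing property on $X$ if and only if $\overline{\omega}_X(Q_1,\dots,Q_m)<1$.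
   Context: Convolution: $(P\ast R)(h)=\sum_{g}P(hg^{-1})R(g)$. A $G$-homogeneous space is a finite set $X$ with transitive $G$-action; $\mathbb{C}X$ has basis $\{e_x\}$ and is a $\mathbb{C}G$-module via $e_g\cdot e_x:=e_{g(x)}$. $\|h\|_{\rm TV}:=\frac12\sum_x|h(x)|$; $\overline{u}:=\frac1{|X|}\sum_x e_x$. Let $(V_j,\rho_j)$ be the irreducible complex representations of $G$, each with a fixed orthonormal basis $B_j$ for a $G$-invariant inner product, and $\hat{Q}(\rho_j):=\sum_gQ(g)[\rho_j(g)]_{B_j}$. The joint spectral radius of complex square matrices $A_1,\dots,A_m$ is ${\rm jsr}(A_1,\dots,A_m):=\lim_{N\to\infty}\max_{|w|=N}\|A_{w_1}\cdots A_{w_N}\|^{1/N}$ (independent of the matrix norm). The Fourier joint spectral radius relative to $X$ is $\overline{\omega}_X(Q_1,\dots,Q_m):=\max\{{\rm jsr}(\widehat{Q_1}(\rho_j),\dots,\widehat{Q_m}(\rho_j))\}$, the maximum over nontrivial irreducible $\rho_j$ appearing with nonzero multiplicity in $\mathbb{C}X$. The set $\{Q_1,\dots,Q_m\}$ has the adversarial mixing property on $X$ if $\lim_{N\to\infty}\max_{x_0\in X,|w|=N}\|q^{(w)}\cdot e_{x_0}-\overline{u}\|_{\rm TV}=0$. *)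

(* Defs.v *)
From HB Require Import structures.
From mathcomp Require Import all_boot all_order all_algebra all_fingroup.
From mathcomp Require Import mxrepresentation.
From mathcomp Require Import all_classical all_reals all_analysis.
From mathcomp Require Import complex.

Set Implicit Arguments.
Unset Strict Implicit.
Unset Printing Implicit Defensive.

Import Order.TTheory GRing.Theory Num.Theory.
Import numFieldNormedType.Exports.
Local Open Scope classical_set_scope.
Local Open Scope ring_scope.

Section Defs.
Variable R : realType.
Variable gT : finGroupType.

Definition cmod (z : R[i]) : R := Num.sqrt (complex.Re z ^+ 2 + complex.Im z ^+ 2).

Definition is_prob (P : gT -> R) : Prop :=
  (forall g, 0 <= P g) /\ \sum_(g : gT) P g = 1.

Definition conv (P P' : gT -> R) : gT -> R :=
  fun h => \sum_(g : gT) P (h * g^-1)%g * P' g.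

Definition delta1 : gT -> R := fun g => (g == 1%g)%:R.

Variable m : nat.
Variable Q : 'I_m -> gT -> R.

Definition Qword (w : seq 'I_m) : gT -> R :=
  foldr (fun i acc => conv (Q i) acc) delta1 w.

Variable X : finType.
Variable act : gT -> X -> X.

(* Coefficients of P . e_{x0} = sum_g P(g) e_{g(x0)} in the basis (e_x). *)
Definition act_vec (P : gT -> R) (x0 : X) : X -> R :=
  fun x => \sum_(g : gT | act g x0 == x) P g.

Definition tv_norm (h : X -> R) : R := 2^-1 * \sum_(x : X) `|h x|.

Definition dev (w : seq 'I_m) (x0 : X) : R :=
  tv_norm (fun x => act_vec (Qword w) x0 x - (#|X|%:R)^-1).

Definition maxdev (N : nat) : R :=
  \big[Num.max/0]_(x0 : X) \big[Num.max/0]_(w : N.-tuple 'I_m) dev w x0.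

Definition adversarial_mixing : Prop := maxdev @ \oo --> (0 : R).

(* A matrix norm (entrywise l1 norm; jsr does not depend on the norm). *)
Definition mxnorm n (A : 'M[R[i]]_n) : R := \sum_(i < n) \sum_(j < n) cmod (A i j).

Definition mxword n (A : 'I_m -> 'M[R[i]]_n) (w : seq 'I_m) : 'M[R[i]]_n :=
  foldr (fun i M => A i *m M) 1%:M w.

Definition jsr n (A : 'I_m -> 'M[R[i]]_n) : R :=
  limn (fun N : nat =>
    powR (\big[Num.max/0]_(w : N.-tuple 'I_m) mxnorm (mxword A w)) (N%:R^-1)).

Definition fourier n (P : gT -> R) (rho : mx_representation R[i] [set: gT]%G n)
  : 'M[R[i]]_n := \sum_(g : gT) ((P g)%:C)%C *: rho g.

(* rho appears with nonzero multiplicity in CX: there is a nonzero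
   G-equivariant linear map T : V -> CX, T v = sum_x (t x *m v) e_x,
   equivariance T (rho g v) = g . T v  <=>  t (g x) *m rho g = t x. *)
Definition appears_in_CX n (rho : mx_representation R[i] [set: gT]%G n) : Prop :=
  exists t : X -> 'rV[R[i]]_n,
    (exists x, t x != 0) /\ forall g x, t (act g x) *m rho g = t x.

Definition trivial_rep n (rho : mx_representation R[i] [set: gT]%G n) : Prop :=
  forall g, rho g = 1%:M.

(* Fourier joint spectral radius relative to X: maximum over nontrivial
   irreducible representations appearing in CX (sup of this finite set;
   0 if the set is empty). *)
Definition omegaX : R :=
  sup [set r : R | exists n (rho : mx_representation R[i] [set: gT]%G n),
     [/\ mx_irreducible rho, ~ trivial_rep rho, appears_in_CX rho &
         r = jsr (fun i => fourier (Q i) rho)]].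

End Defs.

(* Main.v *)
Require Import Defs.
From HB Require Import structures.
From mathcomp Require Import all_boot all_order all_algebra all_fingroup.
From mathcomp Require Import mxrepresentation.
From mathcomp Require Import all_classical all_reals all_analysis.
From mathcomp Require Import complex.
Import Order.TTheory GRing.Theory Num.Theory.
Import numFieldNormedType.Exports.
Local Open Scope classical_set_scope.
Local Open Scope ring_scope.


Lemma invn_cvg0 (R : realType) : (fun N : nat => (N%:R : R)^-1) @ \oo --> 0.
Proof.
rewrite -cvg_shiftS /=.
exact: (@cvg_harmonic R).
Qed.

Lemma powR_invn_cvg1 (R : realType) (c : R) : 0 < c ->
  (fun N : nat => powR c (N%:R^-1)) @ \oo --> (1:R).
Proof.
move=> c0.
have -> : (fun N : nat => powR c (N%:R^-1)) = (fun N => expR (N%:R^-1 * ln c)).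
  by apply: funext => N; rewrite /powR gt_eqF.
have h1 : (fun N : nat => (N%:R : R)^-1 * ln c) @ \oo --> (0 * ln c).
  by apply: cvgMl; exact: invn_cvg0.
rewrite mul0r in h1.
have := @continuous_cvg _ _ _ _ _ _ _ _ (@continuous_expR R 0) h1.
by rewrite expR0; apply.
Qed.

Lemma submult_pow (R : realType) (a : nat -> R) :
  (forall n, 0 <= a n) -> (forall p q, a (p + q)%N <= a p * a q) ->
  forall p q, a (q.+1 * p)%N <= a p ^+ q.+1.
Proof.
move=> a0 sub p; elim=> [|q IH]; first by rewrite mul1n expr1.
rewrite mulSn addnC (le_trans (sub _ _))// exprSr.
by apply: ler_wpM2r.
Qed.

Lemma powR_pow_inv (R : realType) (y : R) (N : nat) : 0 <= y -> (0 < N)%N ->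
  powR (y ^+ N) (N%:R^-1) = y.
Proof.
move=> y0 N0; rewrite -powR_mulrn // -powRrM mulfV ?powRr1 //.
by rewrite pnatr_eq0 -lt0n.
Qed.

Lemma pow_powR_inv (R : realType) (a : R) (N : nat) : 0 <= a -> (0 < N)%N ->
  (powR a (N%:R^-1)) ^+ N = a.
Proof.
move=> a0 N0; rewrite -powR_mulrn ?powR_ge0 // -powRrM mulVf ?powRr1 //.
by rewrite pnatr_eq0 -lt0n.
Qed.
Lemma fekete (R : realType) (a : nat -> R) :
  (forall n, 0 <= a n) -> (forall p q, a (p + q)%N <= a p * a q) ->
  exists L : R, [/\ (fun N : nat => powR (a N) (N%:R^-1)) @ \oo --> L,
    forall N, (0 < N)%N -> L <= powR (a N) (N%:R^-1) & 0 <= L].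
Proof.
move=> a0 sub.
pose x N := powR (a N) (N%:R^-1).
pose E := [set x N | N in [set N | (0 < N)%N]].
have E0 : E !=set0 by exists (x 1%N); exists 1%N.
have Elb : has_lbound E by exists 0 => _ [N _ <-]; exact: powR_ge0.
pose L := inf E.
have L0 : 0 <= L by apply: lb_le_inf => // _ [N _ <-]; exact: powR_ge0.
have Lle : forall N, (0<N)%N -> L <= x N.
  by move=> N N0; apply: ge_inf => //; exists N.
exists L; split => //.
apply/cvgrPdist_lt => e e0.
have [_ [p p0 <-] xp] := @inf_adherent R E (e/2) ltac:(by rewrite divr_gt0) (conj E0 Elb).
set y := x p in xp.
have y0 : 0 <= y by exact: powR_ge0.
pose K := 1 + \sum_(r < p) (y ^+ r)^-1 * a r.
have K1 : 1 <= K.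
  by rewrite lerDl sumr_ge0 // => r _; rewrite mulr_ge0 ?invr_ge0 ?exprn_ge0.
have K0 : 0 < K by rewrite (lt_le_trans ltr01).
have bnd : forall N, (p <= N)%N -> x N <= y * powR K (N%:R^-1).
  move=> N pN.
  have N0 : (0 < N)%N by apply: leq_trans pN.
  have qpos : (0 < N %/ p)%N by rewrite divn_gt0.
  have aN : a N <= a p ^+ (N %/ p)%N * a (N %% p)%N.
    rewrite {1}(divn_eq N p) (le_trans (sub _ _)) //.
    rewrite ler_wpM2r //.
    case E1: (N %/ p)%N%N qpos => [|q] // _.
    exact: submult_pow.
  have [ap0|apn0] := eqVneq (a p) 0.
    have : a N <= 0 by rewrite ap0 expr0n gtn_eqF // mul0r in aN.
    move=> aN0; have aNe : a N = 0 by apply/eqP; rewrite eq_le aN0 a0.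
    rewrite /x aNe powR0 ?mulr_ge0 ?powR_ge0 // invr_eq0 pnatr_eq0 -lt0n //.
  have ypos : 0 < y by rewrite /y /x powR_gt0 // lt0r apn0 a0.
  have apy : a p = y ^+ p by rewrite /y /x pow_powR_inv.
  have aN2 : a N <= y ^+ N * K.
    apply: (le_trans aN).
    set q := (N %/ p)%N in aN *; set r := (N %% p)%N in aN *.
    have eN : N = (q * p + r)%N := divn_eq N p.
    have rp : (r < p)%N by rewrite /r ltn_mod.
    have yr0 : y ^+ r != 0 by rewrite expf_neq0 // gt_eqF.
    have tK : (y ^+ r)^-1 * a r <= K.
      rewrite /K (bigD1 (Ordinal rp)) //= addrCA lerDl addr_ge0 // sumr_ge0 // => i _.
      by rewrite mulr_ge0 ?invr_ge0 ?exprn_ge0.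
    rewrite apy -exprM eN exprD mulnC -mulrA.
    apply: ler_wpM2l; first by rewrite exprn_ge0.
    have -> : a r = y ^+ r * (y ^- r * a r) by rewrite mulrA mulfV // mul1r.
    by apply: ler_wpM2l; rewrite ?exprn_ge0.
  apply: (le_trans (ge0_ler_powR _ _ _ aN2)); rewrite ?invr_ge0 ?ler0n // ?nnegrE ?a0 ?mulr_ge0 ?exprn_ge0 ?(ltW K0) //.
  by rewrite powRM ?exprn_ge0 ?(ltW K0) // powR_pow_inv.
have cy : (fun N : nat => y * powR K (N%:R^-1)) @ \oo --> y.
  have := cvgM (cvg_cst y) (@powR_invn_cvg1 R K K0).
  by rewrite mulr1; apply.
have yLe : y < L + e.
  by apply: (lt_le_trans xp); rewrite lerD2l ler_pdivrMr // ler_pMr // ler1n.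
near=> N.
have pN : (p <= N)%N by near: N; exact: nbhs_infty_ge.
have N0 : (0 < N)%N by apply: leq_trans pN.
have hl := Lle N N0.
rewrite distrC ger0_norm ?subr_ge0 // ltrBlDl.
apply: (le_lt_trans (bnd N pN)).
near: N; exact: cvgr_lt cy _ yLe.
Unshelve. all: by end_near.
Qed.
Lemma cvg_max2 (R : realType) (u v : nat -> R) (a b : R) :
  u @ \oo --> a -> v @ \oo --> b ->
  (fun N => Num.max (u N) (v N)) @ \oo --> Num.max a b.
Proof.
move=> ua vb.
have -> : (fun N => Num.max (u N) (v N)) = (fun N => (u N + v N + `|u N - v N|) / 2).
  by apply: funext => N; rewrite maxr_absE.
rewrite maxr_absE.
apply: cvgM; last exact: cvg_cst.
apply: cvgD; first exact: cvgD.
by apply: cvg_norm; apply: cvgB.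
Qed.

Lemma cvg_bigmax (R : realType) (I : finType) (u : I -> nat -> R) (l : I -> R) :
  (forall i, u i @ \oo --> l i) ->
  (fun N => \big[Num.max/0]_i u i N) @ \oo --> \big[Num.max/0]_i l i.
Proof.
move=> ul.
elim: (index_enum I) => [|i s IH].
  have -> : (fun N => \big[Num.max/0]_(i <- [::]) u i N) = fun=> 0.
    by apply: funext => N; rewrite big_nil.
  by rewrite big_nil; exact: cvg_cst.
have -> : (fun N => \big[Num.max/0]_(j <- i :: s) u j N) =
   (fun N => Num.max (u i N) (\big[Num.max/0]_(j <- s) u j N)).
  by apply: funext => N; rewrite big_cons.
rewrite big_cons; exact: cvg_max2.
Qed.

Lemma powR_sandwich (R : realType) (x y : nat -> R) (c C L : R) :
  0 < c -> 0 < C -> (forall N, 0 <= y N) ->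
  (forall N, c * y N <= x N) -> (forall N, x N <= C * y N) ->
  (fun N => powR (y N) (N%:R^-1)) @ \oo --> L ->
  (fun N => powR (x N) (N%:R^-1)) @ \oo --> L.
Proof.
move=> c0 C0 y0 lo hi yL.
have x0 N : 0 <= x N by apply: (le_trans _ (lo N)); rewrite mulr_ge0 // ltW.
apply: (@squeeze_cvgr _ _ _ _ (fun N => powR c (N%:R^-1) * powR (y N) (N%:R^-1))
   (fun N => powR C (N%:R^-1) * powR (y N) (N%:R^-1))).
- near=> N; rewrite -!powRM ?(ltW c0) ?(ltW C0) //.
  by apply/andP; split; apply: ge0_ler_powR; rewrite ?invr_ge0 ?ler0n ?nnegrE ?mulr_ge0 ?(ltW c0) ?(ltW C0) ?x0.
- have := cvgM (@powR_invn_cvg1 R c c0) yL; rewrite mul1r; apply.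
- have := cvgM (@powR_invn_cvg1 R C C0) yL; rewrite mul1r; apply.
Unshelve. all: by end_near.
Qed.

Lemma powR_cmp (R : realType) (x y : nat -> R) (C Lx Ly : R) :
  0 < C -> (forall N, 0 <= x N) ->
  (forall N, x N <= C * y N) ->
  (fun N => powR (x N) (N%:R^-1)) @ \oo --> Lx ->
  (fun N => powR (y N) (N%:R^-1)) @ \oo --> Ly -> Lx <= Ly.
Proof.
move=> C0 x0 hi xL yL.
have y0 N : 0 <= y N.
  by have := le_trans (x0 N) (hi N); rewrite pmulr_rge0.
have hC := cvgM (@powR_invn_cvg1 R C C0) yL; rewrite mul1r in hC.
apply: (ler_cvg_to xL (hC _)).
near=> N; rewrite /= -powRM ?(ltW C0) //.
by apply: ge0_ler_powR; rewrite ?invr_ge0 ?ler0n ?nnegrE ?mulr_ge0 ?(ltW C0).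
Unshelve. all: by end_near.
Qed.

From mathcomp.algebra_tactics Require Import ring lra.
Section Alg.
Variables (R : realType) (gT : finGroupType) (X : finType) (act : gT -> X -> X).
Hypothesis act1 : forall x, act 1%g x = x.
Hypothesis actM : forall g h x, act (g * h)%g x = act g (act h x).

Local Notation C := (R[i]).
Local Notation k := #|X|.

Definition xv (i : 'I_k) : X := enum_val i.

Definition sigm (g : gT) : 'M[C]_k := \matrix_(i, j) ((xv i == act g (xv j))%:R).

Lemma act_inj g : injective (act g).
Proof.
move=> x y e.
by rewrite -[x]act1 -[y]act1 -(mulVg g) !actM e.
Qed.

Lemma sigm_repr : mx_repr [set: gT]%G sigm.
Proof.
split.
  apply/matrixP => i j; rewrite !mxE act1 /xv.
  by rewrite (inj_eq enum_val_inj).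
move=> g h _ _; apply/matrixP => i j; rewrite !mxE.
rewrite (bigD1 (enum_rank (act h (xv j)))) //= big1 ?addr0.
  by rewrite !mxE /xv enum_rankK eqxx mulr1 actM.
move=> l hl; rewrite !mxE.
have -> : (xv l == act h (xv j)) = false.
  apply/negbTE; apply: contra hl => /eqP <-; by rewrite /xv enum_valK.
by rewrite mulr0.
Qed.
Definition sigR : mx_representation C [set: gT]%G k := MxRepresentation sigm_repr.

Lemma fourier_conv n (rho : mx_representation C [set: gT]%G n) (P P' : gT -> R) :
  fourier (Defs.conv P P') rho = fourier P rho *m fourier P' rho.
Proof.
rewrite /fourier /Defs.conv mulmx_suml.
transitivity (\sum_b \sum_a ((P a * P' b)%:C%C *: rho (a * b)%g)).
  rewrite (eq_bigr (fun h => \sum_g ((P (h * g^-1)%g * P' g)%:C%C *: rho h))); last first.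
    by move=> h _; rewrite rmorph_sum scaler_suml.
  rewrite exchange_big /=; apply: eq_bigr => g _.
  rewrite (reindex_inj (mulIg g)) /=; apply: eq_bigr => a _.
  by rewrite mulgK.
rewrite exchange_big /=; apply: eq_bigr => a _; rewrite mulmx_sumr; apply: eq_bigr => b _.
by rewrite -scalemxAl -scalemxAr scalerA repr_mxM ?inE // rmorphM.
Qed.

Lemma fourier_delta1 n (rho : mx_representation C [set: gT]%G n) :
  fourier (delta1 R (gT:=gT)) rho = 1%:M.
Proof.
rewrite /fourier (bigD1 1%g) //= big1 ?addr0.
  by rewrite /delta1 eqxx scale1r repr_mx1.
by move=> g /negPf hg; rewrite /delta1 hg scale0r.
Qed.

Lemma fourier_Qword m (Q : 'I_m -> gT -> R) n (rho : mx_representation C [set: gT]%G n)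
  (w : seq 'I_m) :
  fourier (Qword Q w) rho = mxword (fun i => fourier (Q i) rho) w.
Proof.
elim: w => [|i w IH] /=; first exact: fourier_delta1.
by rewrite fourier_conv IH.
Qed.

Lemma fourier_intertw n1 n2 (r1 : mx_representation C [set: gT]%G n1)
  (r2 : mx_representation C [set: gT]%G n2) (T : 'M[C]_(n1, n2)) (P : gT -> R) :
  (forall g, r1 g *m T = T *m r2 g) -> fourier P r1 *m T = T *m fourier P r2.
Proof.
move=> hT; rewrite /fourier mulmx_suml mulmx_sumr; apply: eq_bigr => g _.
by rewrite -scalemxAl -scalemxAr hT.
Qed.
Lemma sumX (V : nmodType) (F : X -> V) : \sum_(i < k) F (xv i) = \sum_x F x.
Proof.
rewrite (reindex (@enum_rank X)) /=; last by exists (@enum_val X predT) => x _; rewrite ?enum_rankK ?enum_valK.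
by apply: eq_bigr => x _; rewrite /xv enum_rankK.
Qed.

Lemma cmodE (z : C) : cmod z = Normc.normc z.
Proof. by case: z. Qed.

Lemma cmod_ge0 (z : C) : 0 <= cmod z.
Proof. by rewrite /cmod sqrtr_ge0. Qed.

Lemma cmodM (z w : C) : cmod (z * w) = cmod z * cmod w.
Proof. by rewrite !cmodE Normc.normcM. Qed.

Lemma cmodD (z w : C) : cmod (z + w) <= cmod z + cmod w.
Proof. by rewrite !cmodE le_normcD. Qed.

Lemma cmod0 : cmod (0 : C) = 0.
Proof. by rewrite cmodE Normc.normc0. Qed.

Lemma cmodR (x : R) : cmod (x%:C%C) = `|x|.
Proof. by rewrite /cmod /= expr0n /= addr0 sqrtr_sqr. Qed.

Lemma cmod_sum (I : Type) (r : seq I) (P : pred I) (F : I -> C) :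
  cmod (\sum_(i <- r | P i) F i) <= \sum_(i <- r | P i) cmod (F i).
Proof.
elim/big_rec2: _ => [|i y z _ Hz]; first by rewrite cmod0.
by apply: (le_trans (cmodD _ _)); rewrite lerD2l.
Qed.

Definition nrm {p q} (A : 'M[C]_(p, q)) : R := \sum_(i < p) \sum_(j < q) cmod (A i j).

Lemma nrm_ge0 {p q} (A : 'M[C]_(p, q)) : 0 <= nrm A.
Proof. by apply: sumr_ge0 => i _; apply: sumr_ge0 => j _; exact: cmod_ge0. Qed.

Lemma nrm_mul {p q r} (A : 'M[C]_(p, q)) (B : 'M[C]_(q, r)) :
  nrm (A *m B) <= nrm A * nrm B.
Proof.
rewrite /nrm mulr_suml; apply: ler_sum => i _.
apply: (@le_trans _ _ (\sum_j \sum_l cmod (A i l) * cmod (B l j))).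
  apply: ler_sum => j _; rewrite mxE; apply: le_trans (cmod_sum _ _ _ _) _.
  by apply: ler_sum => l _; rewrite cmodM.
rewrite exchange_big /= mulr_suml; apply: ler_sum => l _.
rewrite -mulr_sumr; apply: ler_wpM2l; first exact: cmod_ge0.
rewrite (bigD1 l) //= lerDl; apply: sumr_ge0 => l' _.
by apply: sumr_ge0 => j _; exact: cmod_ge0.
Qed.

Lemma nrm_mxnorm n (A : 'M[C]_n) : mxnorm A = nrm A.
Proof. by []. Qed.
Lemma fourier_sig_entry (P : gT -> R) i j :
  fourier P sigR i j = (act_vec act P (xv j) (xv i))%:C%C.
Proof.
rewrite /fourier summxE /act_vec rmorph_sum [RHS]big_mkcond /=.
apply: eq_bigr => g _; rewrite !mxE /=.
by rewrite eq_sym; case: eqP => _; rewrite ?mulr1 ?mulr0.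
Qed.

Variables (m : nat) (Q : 'I_m -> gT -> R).

Definition an {n} (rho : mx_representation C [set: gT]%G n) (N : nat) : R :=
  \big[Num.max/0]_(w : N.-tuple 'I_m) mxnorm (mxword (fun i => fourier (Q i) rho) w).

Lemma dev_le_maxdev N (w : N.-tuple 'I_m) x0 : dev Q act w x0 <= maxdev Q act N.
Proof.
rewrite /maxdev; apply: le_trans (le_bigmax _ _ x0).
exact: (le_bigmax _ (fun w : N.-tuple 'I_m => dev Q act w x0) w).
Qed.

Lemma maxdev_ge0 N : 0 <= maxdev Q act N.
Proof.
rewrite /maxdev; elim/big_ind: _ => //; first by move=> x y hx hy; rewrite le_max hx.
move=> x0 _; elim/big_ind: _ => //; first by move=> x y hx hy; rewrite le_max hx.
move=> w _; rewrite /dev /tv_norm mulr_ge0 ?invr_ge0 ?ler0n //.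
by apply: sumr_ge0 => x _.
Qed.

Lemma an_ge0 n (rho : mx_representation C [set: gT]%G n) N : 0 <= an rho N.
Proof.
rewrite /an; elim/big_ind: _ => //; first by move=> x y hx hy; rewrite le_max hx.
move=> w _; rewrite nrm_mxnorm; exact: nrm_ge0.
Qed.

Lemma nrm_DT {N} (w : N.-tuple 'I_m) {p} (T : 'M[C]_(k, p)) :
  (forall j, \sum_l T l j = 0) ->
  nrm (fourier (Qword Q w) sigR *m T) <= 2 * maxdev Q act N * nrm T.
Proof.
move=> T0.
pose a l i := act_vec act (Qword Q w) (xv l) (xv i) - k%:R^-1.
have e i j : (fourier (Qword Q w) sigR *m T) i j = \sum_l (a l i)%:C%C * T l j.
  rewrite mxE.
  have -> : \sum_l (a l i)%:C%C * T l j =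
      \sum_l (fourier (Qword Q w) sigR i l * T l j) - (k%:R^-1)%:C%C * \sum_l T l j.
    rewrite mulr_sumr -sumrB; apply: eq_bigr => l _.
    by rewrite fourier_sig_entry /a rmorphB /= mulrBl.
  by rewrite T0 mulr0 subr0.
apply: (@le_trans _ _ (\sum_i \sum_j \sum_l `|a l i| * cmod (T l j))).
  apply: ler_sum => i _; apply: ler_sum => j _; rewrite e.
  apply: le_trans (cmod_sum _ _ _ _) _.
  by apply: ler_sum => l _; rewrite cmodM cmodR.
rewrite (eq_bigr (fun i => \sum_l \sum_j `|a l i| * cmod (T l j))); last first.
  by move=> i _; rewrite exchange_big.
rewrite exchange_big /= /nrm mulr_sumr; apply: ler_sum => l _.
rewrite exchange_big /= mulr_sumr; apply: ler_sum => j _.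
rewrite -mulr_suml; apply: ler_wpM2r; first exact: cmod_ge0.
have -> : \sum_i `|a l i| = 2 * dev Q act w (xv l).
  rewrite /dev /tv_norm mulrA divff ?pnatr_eq0 // mul1r.
  by rewrite -(@sumX _ (fun x => `|act_vec act (Qword Q w) (xv l) x - k%:R^-1|)).
by apply: ler_wpM2l => //; exact: dev_le_maxdev.
Qed.
Lemma lower_bound n (rho : mx_representation C [set: gT]%G n) :
  mx_irreducible rho -> ~ trivial_rep rho -> appears_in_CX act rho ->
  exists2 c : R, 0 < c & forall N, an rho N <= c * maxdev Q act N.
Proof.
move=> irr ntriv [t [[x1 tx1] tG]].
have tG' g x : t x *m rho g = t (act g^-1 x).
  by rewrite -{1}[x](_ : act g (act g^-1 x) = x) ?tG // -actM mulgV act1.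
pose T : 'M[C]_(k, n) := \matrix_(i, j) t (xv i) 0 j.
have rowT i : row i T = t (xv i) by apply/rowP => j; rewrite !mxE.
have Tint g : sigm g *m T = T *m rho g.
  apply/row_matrixP => i; rewrite !row_mul rowT tG' mulmx_sum_row.
  rewrite (bigD1 (enum_rank (act g^-1 (xv i)))) //= big1 ?addr0.
    by rewrite !mxE /xv enum_rankK -actM mulgV act1 eqxx scale1r rowT /xv enum_rankK.
  move=> l hl; rewrite !mxE.
  have -> : (xv i == act g (xv l)) = false.
    apply/negbTE; apply: contra hl => /eqP ->.
    by rewrite -actM mulVg act1 /xv enum_valK.
  by rewrite scale0r.
have sfix g : (\sum_x t x) *m rho g = \sum_x t x.
  rewrite mulmx_suml (eq_bigr (fun x => t (act g^-1 x))); last by move=> x _; rewrite tG'.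
  by rewrite [RHS](reindex_inj (act_inj g^-1)).
have s0 : \sum_x t x = 0.
  apply/eqP; apply: contraT; set s := \sum_x t x => snz.
  have /mx_irrP [_ irrU] := irr.
  have sF : (s <= rfix_mx rho [set: gT]%G)%MS.
    by apply/rfix_mxP => g _; exact: sfix.
  have Fnz : rfix_mx rho [set: gT]%G != 0.
    apply/negP => /eqP F0; move: sF; rewrite F0 submx0 => s0.
    by rewrite s0 in snz.
  have := irrU _ (rfix_mx_module rho) Fnz; rewrite -sub1mx => /rfix_mxP h.
  exfalso; apply: ntriv => g; by rewrite -(h g) ?mul1mx ?inE.
have colT j : \sum_l T l j = 0.
  rewrite (eq_bigr (fun l => t (xv l) 0 j)); last by move=> l _; rewrite mxE.
  by rewrite (@sumX _ (fun x => t x 0 j)) -summxE s0 mxE.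
have Tmod : mxmodule rho T.
  by apply/mxmoduleP => g _; rewrite -Tint; exact: submxMl.
have Tnz : T != 0.
  apply: contraNneq tx1 => T0; by rewrite -[x1]enum_rankK -/(xv _) -rowT T0 row0.
have /mx_irrP [_ irrU] := irr.
have Tfull : row_full T.
  have Um : mxmodule rho <<T>>%MS by rewrite (eqmx_module _ (genmxE T)).
  have Unz : <<T>>%MS != 0 by rewrite -mxrank_eq0 genmxE mxrank_eq0.
  by have := irrU _ Um Unz; rewrite /row_full genmxE.
have [L LT] := row_fullP Tfull.
exists (1 + 2 * nrm L * nrm T).
  by rewrite ltr_pwDl // mulr_ge0 ?nrm_ge0 // mulr_ge0 ?nrm_ge0.
move=> N; rewrite /an; apply/bigmax_leP; split.
  by rewrite mulr_ge0 ?maxdev_ge0 // addr_ge0 // mulr_ge0 ?nrm_ge0 // mulr_ge0 ?nrm_ge0.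
move=> w _.
rewrite -fourier_Qword.
have -> : fourier (Qword Q w) rho = L *m (fourier (Qword Q w) sigR *m T).
  by rewrite (@fourier_intertw _ _ sigR rho T _ Tint) mulmxA LT mul1mx.
have h1 := nrm_mul L (fourier (Qword Q w) sigR *m T).
have h2 := nrm_DT w T colT.
rewrite nrm_mxnorm; apply: (le_trans h1).
apply: (le_trans (ler_wpM2l (nrm_ge0 L) h2)).
have -> : nrm L * (2 * maxdev Q act N * nrm T) = 2 * nrm L * nrm T * maxdev Q act N by ring.
have h3 := maxdev_ge0 N; rewrite mulrDl mul1r; lra.
Qed.
Definition dualm {n} (rho : mx_representation C [set: gT]%G n) (g : gT) : 'M[C]_n :=
  (rho g^-1%g)^T.

Lemma dual_repr {n} (rho : mx_representation C [set: gT]%G n) :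
  mx_repr [set: gT]%G (dualm rho).
Proof.
split; first by rewrite /dualm invg1 repr_mx1 trmx1.
by move=> g h _ _; rewrite /dualm invMg repr_mxM ?inE // trmx_mul.
Qed.

Definition dualR {n} (rho : mx_representation C [set: gT]%G n) :
  mx_representation C [set: gT]%G n := MxRepresentation (dual_repr rho).

Lemma dual_irr {n} (rho : mx_representation C [set: gT]%G n) :
  mx_irreducible rho -> mx_irreducible (dualR rho).
Proof.
move=> /mx_irrP [n0 irrU]; apply/mx_irrP; split => // U Umod Unz.
pose K := kermx U^T.
have Kmod : mxmodule rho K.
  apply/mxmoduleP => g _; apply/sub_kermxP.
  have : (U *m dualR rho g^-1%g <= U)%MS by move/mxmoduleP: Umod; apply; rewrite inE.
  case/submxP => M eM.
  rewrite -mulmxA.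
  have -> : rho g *m U^T = (U *m dualR rho g^-1%g)^T.
    by rewrite trmx_mul /= /dualm invgK trmxK.
  by rewrite eM trmx_mul mulmxA mulmx_ker mul0mx.
have K0 : K = 0.
  apply/eqP; apply: contraT => Knz.
  have [L LK] := row_fullP (irrU _ Kmod Knz).
  have : U^T = 0 by rewrite -[U^T]mul1mx -LK -mulmxA mulmx_ker mulmx0.
  move/(congr1 trmx); rewrite trmxK trmx0 => U0.
  by rewrite U0 eqxx in Unz.
have : row_free U^T by rewrite -kermx_eq0 -/K K0.
by rewrite /row_free /row_full mxrank_tr.
Qed.
Hypothesis trans : forall x y : X, exists g, act g x = y.
Hypothesis Xpos : (0 < k)%N.

Lemma sigm_tr g : (sigm g)^T = sigm g^-1%g.
Proof.
apply/matrixP => i j; rewrite !mxE.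
have E : (xv j == act g (xv i)) = (xv i == act g^-1 (xv j)).
  by apply/eqP/eqP => [->|->]; rewrite -actM ?mulVg ?mulgV act1.
by rewrite E.
Qed.

Definition ones : 'M[C]_(k, 1) := const_mx 1.

Lemma sigm_ones g : sigm g *m ones = ones.
Proof.
apply/matrixP => i j; rewrite !mxE.
rewrite (bigD1 (enum_rank (act g^-1%g (xv i)))) //= big1 ?addr0.
  by rewrite !mxE /xv enum_rankK -actM mulgV act1 eqxx mul1r.
move=> l hl; rewrite !mxE.
have -> : (xv i == act g (xv l)) = false.
  apply/negbTE; apply: contra hl => /eqP ->.
  by rewrite -actM mulVg act1 /xv enum_valK.
by rewrite mul0r.
Qed.

Definition W0 : 'M[C]_k := kermx ones.

Lemma W0mod : mxmodule sigR W0.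
Proof.
apply/mxmoduleP => g _; apply/sub_kermxP.
by rewrite -mulmxA sigm_ones mulmx_ker.
Qed.

Lemma fixed_row_const (v : 'rV[C]_k) :
  (forall g, v *m sigm g = v) -> forall i j, v 0 i = v 0 j.
Proof.
move=> fv.
have key g j : v 0 (enum_rank (act g (xv j))) = v 0 j.
  rewrite -{2}(fv g) !mxE (bigD1 (enum_rank (act g (xv j)))) //= big1 ?addr0.
    by rewrite !mxE /xv enum_rankK eqxx mulr1.
  move=> l hl; rewrite !mxE.
  have -> : (xv l == act g (xv j)) = false.
    by apply/negbTE; apply: contra hl => /eqP <-; rewrite /xv enum_valK.
  by rewrite mulr0.
move=> i j; have [g hg] := trans (xv j) (xv i).
by rewrite -(key g j) hg /xv enum_valK.
Qed.

Lemma fixed_W0_row0 (v : 'rV[C]_k) :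
  (forall g, v *m sigm g = v) -> (v <= W0)%MS -> v = 0.
Proof.
move=> fv /sub_kermxP vW.
have cst := @fixed_row_const v fv.
pose i0 : 'I_k := Ordinal Xpos.
have : (v *m ones) 0 0 = k%:R * v 0 i0.
  rewrite !mxE (eq_bigr (fun=> v 0 i0)); last by move=> j _; rewrite mxE mulr1 (cst j i0).
  by rewrite sumr_const card_ord mulr_natl.
rewrite vW mxE => /esym /eqP; rewrite mulf_eq0 pnatr_eq0 => /orP [/eqP k0|/eqP v0].
  by exfalso; move: Xpos; rewrite k0.
by apply/rowP => j; rewrite (cst j i0) v0 mxE.
Qed.

Lemma appears_of_T n (tau : mx_representation C [set: gT]%G n) (T : 'M[C]_(k, n)) :
  T != 0 -> (forall g, sigm g *m T = T *m tau g) -> appears_in_CX act tau.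
Proof.
move=> Tnz Tint.
exists (fun x => row (enum_rank x) T); split.
  case: (pickP (fun i => row i T != 0)) => [i hi|h].
    by exists (xv i); rewrite /xv enum_valK.
  suff T0 : T = 0 by rewrite T0 eqxx in Tnz.
  apply/row_matrixP => i; rewrite row0.
  by move/negbFE/eqP: (h i).
move=> g x.
rewrite -row_mul -Tint row_mul mulmx_sum_row.
rewrite (bigD1 (enum_rank x)) //= big1 ?addr0.
  by rewrite !mxE /xv !enum_rankK eqxx scale1r.
move=> l hl; rewrite !mxE.
have -> : (xv (enum_rank (act g x)) == act g (xv l)) = false.
  apply/negbTE; apply: contra hl; rewrite /xv enum_rankK => /eqP /act_inj ->.
  by rewrite enum_valK.
by rewrite scale0r.
Qed.
Definition tauU {U : 'M[C]_k} (Umod : mxmodule sigR U) := dualR (submod_repr Umod).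
Definition BU (U : 'M[C]_k) : 'M[C]_(\rank U, k) := val_submod (U := U) 1%:M.
Definition TU (U : 'M[C]_k) : 'M[C]_(k, \rank U) := (BU U)^T.

Lemma BU_int (U : 'M[C]_k) (Umod : mxmodule sigR U) g :
  submod_repr Umod g *m BU U = BU U *m sigm g.
Proof.
have := @val_submodJ _ _ _ _ _ _ Umod _ 1%:M g.
by rewrite inE mul1mx val_submodE => ->.
Qed.

Lemma TU_int (U : 'M[C]_k) (Umod : mxmodule sigR U) g :
  sigm g *m TU U = TU U *m tauU Umod g.
Proof.
rewrite /TU /tauU /= /dualm.
rewrite -[sigm g]trmxK -trmx_mul sigm_tr -BU_int trmx_mul.
by [].
Qed.

Lemma BU_nz (U : 'M[C]_k) : U != 0 -> BU U != 0.
Proof.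
move=> Unz; apply: contraNneq Unz => B0.
by rewrite -mxrank_eq0 -(val_submod1 U).1 -/(BU U) B0 mxrank0.
Qed.
Lemma member (U : 'M[C]_k) (simU : mxsimple sigR U) (sUW : (U <= W0)%MS) :
  [/\ mx_irreducible (tauU (mxsimple_module simU)),
      ~ trivial_rep (tauU (mxsimple_module simU)) &
      appears_in_CX act (tauU (mxsimple_module simU))].
Proof.
set Umod := mxsimple_module simU.
have Unz : U != 0 by case: (simU).
split.
- by apply: dual_irr; apply/(submod_mx_irr Umod).
- move=> triv.
  have rho1 g : submod_repr Umod g = 1%:M.
    have := triv g^-1%g; rewrite /tauU /= /dualm invgK => /(congr1 trmx).
    by rewrite trmxK trmx1.
  have Bfix g : BU U *m sigm g = BU U by rewrite -(@BU_int U Umod g) rho1 mul1mx.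
  have B0 : BU U = 0.
    apply/row_matrixP => i; rewrite row0.
    apply: fixed_W0_row0.
      by move=> g; rewrite -row_mul Bfix.
    apply: submx_trans (row_sub i _) _; apply: submx_trans sUW.
    by rewrite /BU val_submodP.
  by have := BU_nz U Unz; rewrite B0 eqxx.
- apply: (@appears_of_T _ _ (TU U)); last exact: TU_int.
  apply: contraNneq (BU_nz U Unz) => T0.
  by rewrite -[BU U]trmxK -/(TU U) T0 trmx0.
Qed.
Lemma decomp : exists (I : finType) (W : I -> 'M[C]_k),
  [/\ forall i, mxsimple sigR (W i), forall i, (W i <= W0)%MS & (W0 <= \sum_i W i)%MS].
Proof.
have pg : pgroup.pgroup [pchar C]^' [set: gT]%G.
  by rewrite /pgroup.pgroup pcharf'_nat pnatr_eq0 -lt0n cardG_gt0.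
have red : mx_completely_reducible sigR W0.
  exact: (mx_reducibleS W0mod (submx1 _) (mx_Maschke_pchar sigR pg)).
pose P := exists (I : finType) (W : I -> 'M[C]_k),
  [/\ forall i, mxsimple sigR (W i), forall i, (W i <= W0)%MS & (W0 <= \sum_i W i)%MS].
suff : `[< P >] by move/asboolP.
apply: (mx_reducible_semisimple W0mod red) => -[I W /= simW defW _].
apply/asboolP; exists I, W; split => //.
  by move=> i; rewrite -defW; apply: (sumsmx_sup i).
by rewrite -defW.
Qed.
Hypothesis Qsum : forall i, \sum_g Q i g = 1.

Lemma Qword_sum (w : seq 'I_m) : \sum_g Qword Q w g = 1.
Proof.
elim: w => [|i w IH] /=.
  rewrite (bigD1 1%g) //= big1 ?addr0 /delta1 ?eqxx //.
  by move=> g /negPf hg; rewrite hg.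
rewrite /Defs.conv exchange_big /=.
rewrite (eq_bigr (fun g => Qword Q w g)); first by rewrite IH.
move=> g _; rewrite -mulr_suml.
by rewrite (reindex_inj (mulIg g)) /= (eq_bigr (Q i)) ?Qsum ?mul1r // => a _; rewrite mulgK.
Qed.

Lemma act_vec_colsum (P : gT -> R) x : \sum_y act_vec act P y x = \sum_g P g.
Proof.
rewrite /act_vec (eq_bigr (fun y => \sum_g (if act g y == x then P g else 0))); last first.
  by move=> y _; rewrite big_mkcond.
rewrite exchange_big /=; apply: eq_bigr => g _.
rewrite (bigD1 (act g^-1%g x)) //= -actM mulgV act1 eqxx big1 ?addr0 //.
move=> y hy; case: eqP => // e; case/eqP: hy.
by rewrite -e -actM mulVg act1.
Qed.

Lemma nrm_sum p q (J : finType) (M : J -> 'M[C]_(p, q)) :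
  nrm (\sum_j M j) <= \sum_j nrm (M j).
Proof.
rewrite /nrm.
have -> : \sum_j0 \sum_(i < p) \sum_(j < q) cmod (M j0 i j) =
          \sum_(i < p) \sum_(j < q) \sum_j0 cmod (M j0 i j).
  rewrite exchange_big /=; apply: eq_bigr => i _; by rewrite exchange_big.
apply: ler_sum => i _; apply: ler_sum => j _.
by rewrite summxE; apply: cmod_sum.
Qed.

Lemma nrm_tr p q (M : 'M[C]_(p, q)) : nrm M^T = nrm M.
Proof.
rewrite /nrm [RHS]exchange_big /=; apply: eq_bigr => i _; apply: eq_bigr => j _.
by rewrite mxE.
Qed.
Lemma upper (I : finType) (W : I -> 'M[C]_k) (simW : forall i, mxsimple sigR (W i))
  (Wsum : (W0 <= \sum_i W i)%MS) :
  exists2 Cu : R, 0 < Cu & forall N, maxdev Q act N <=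
     Cu * \big[Num.max/0]_i an (tauU (mxsimple_module (simW i))) N.
Proof.
set tau := fun i => tauU (mxsimple_module (simW i)).
set b := fun N => \big[Num.max/0]_i an (tau i) N.
have b0 N : 0 <= b N.
  rewrite /b; elim/big_ind: _ => //; first by move=> x y hx hy; rewrite le_max hx.
  move=> i _; exact: an_ge0.
have anb i N : an (tau i) N <= b N.
  exact: (le_bigmax _ (fun i => an (tau i) N) i).
have perx : forall x0 : X, exists K : R, 0 <= K /\
    forall N (w : N.-tuple 'I_m), dev Q act w x0 <= K * b N.
  move=> x0.
  pose r0 := enum_rank x0.
  pose kinv : C := (k%:R)^-1.
  pose c : 'rV[C]_k := \row_l ((l == r0)%:R - kinv).
  have sum1 : \sum_(l < k) ((l == r0)%:R : C) = 1.
    rewrite (bigD1 r0) //= eqxx big1 ?addr0 // => l /negPf ->; done.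
  have cW : (c <= W0)%MS.
    apply/sub_kermxP; apply/matrixP => a z; rewrite !mxE.
    rewrite (eq_bigr (fun l => (l == r0)%:R - kinv)); last by move=> l _; rewrite !mxE mulr1.
    rewrite sumrB sum1 sumr_const card_ord -mulr_natl /kinv mulfV ?subrr //.
    by rewrite pnatr_eq0 -lt0n.
  have cW' : (c <= \sum_i W i)%MS := submx_trans cW Wsum.
  have [u cu] := sub_sumsmxP cW'.
  pose y i : 'rV_(\rank (W i)) := (u i *m W i) *m pinvmx (BU (W i)).
  have uy i : u i *m W i = y i *m BU (W i).
    rewrite /y mulmxKpV //.
    have E := val_submod1 (W i).
    by rewrite /BU E submxMl.
  have cT : c^T = \sum_i TU (W i) *m (y i)^T.
    rewrite cu linear_sum /=; apply: eq_bigr => i _.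
    by rewrite uy trmx_mul.
  exists (\sum_i nrm (TU (W i)) * nrm (y i)^T); split.
    by apply: sumr_ge0 => i _; rewrite mulr_ge0 ?nrm_ge0.
  move=> N w.
  set D := fourier (Qword Q w) sigR.
  have rs j : \sum_l D j l = 1.
    rewrite (eq_bigr (fun l => (act_vec act (Qword Q w) (xv l) (xv j))%:C%C)); last first.
      by move=> l _; rewrite /D fourier_sig_entry.
    by rewrite -rmorph_sum (@sumX _ (fun y => act_vec act (Qword Q w) y (xv j))) act_vec_colsum Qword_sum.
  have ent j : (D *m c^T) j 0 = (act_vec act (Qword Q w) x0 (xv j) - k%:R^-1)%:C%C.
    rewrite mxE (eq_bigr (fun l => D j l * (l == r0)%:R - D j l * kinv)); last first.
      by move=> l _; rewrite !mxE mulrBr.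
    rewrite sumrB -mulr_suml rs mul1r.
    rewrite (bigD1 r0) //= eqxx mulr1 big1 ?addr0; last by move=> l /negPf ->; rewrite mulr0.
    by rewrite /D fourier_sig_entry /xv enum_rankK rmorphB /= fmorphV /= rmorph_nat.
  have e2 : 2 * dev Q act w x0 = nrm (D *m c^T).
    rewrite /nrm (eq_bigr (fun j => cmod ((D *m c^T) j 0))); last by move=> j _; rewrite big_ord1.
    rewrite (eq_bigr (fun j => `|act_vec act (Qword Q w) x0 (xv j) - k%:R^-1|)); last first.
      by move=> j _; rewrite ent cmodR.
    rewrite (@sumX _ (fun x => `|act_vec act (Qword Q w) x0 x - k%:R^-1|)).
    by rewrite /dev /tv_norm mulrA divff ?pnatr_eq0 // mul1r.
  have DcT : D *m c^T = \sum_i TU (W i) *m (fourier (Qword Q w) (tau i) *m (y i)^T).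
    rewrite cT mulmx_sumr; apply: eq_bigr => i _.
    rewrite mulmxA (@fourier_intertw _ _ sigR (tau i) (TU (W i)) _ (@TU_int (W i) (mxsimple_module (simW i)))).
    by rewrite mulmxA.
  have bound : nrm (D *m c^T) <= (\sum_i nrm (TU (W i)) * nrm (y i)^T) * b N.
    rewrite DcT mulr_suml; apply: le_trans (nrm_sum _ _ _ _) _; apply: ler_sum => i _.
    apply: le_trans (nrm_mul _ _) _.
    rewrite -mulrA; apply: ler_wpM2l; first exact: nrm_ge0.
    apply: le_trans (nrm_mul _ _) _.
    rewrite [X in _ <= X]mulrC; apply: ler_wpM2r; first exact: nrm_ge0.
    rewrite fourier_Qword -nrm_mxnorm.
    apply: le_trans (anb i N).
    exact: (le_bigmax _ (fun w : N.-tuple 'I_m => mxnorm (mxword (fun j => fourier (Q j) (tau i)) w)) w).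
  have dev0 : 0 <= dev Q act w x0.
    by rewrite /dev /tv_norm mulr_ge0 ?invr_ge0 ?ler0n // sumr_ge0.
  rewrite -e2 in bound; lra.
have [Kf hK] := boolp.choice perx.
exists (1 + \sum_x Kf x).
  have : 0 <= \sum_x Kf x by apply: sumr_ge0 => x _; case: (hK x).
  lra.
move=> N.
have bN : 0 <= b N := b0 N.
have sK : 0 <= \sum_x Kf x by apply: sumr_ge0 => x _; case: (hK x).
have C0 : 0 <= 1 + \sum_x Kf x by lra.
rewrite /b /tau in bN.
rewrite /maxdev; apply/bigmax_leP; split; first exact: mulr_ge0.
move=> x0 _; apply/bigmax_leP; split; first exact: mulr_ge0.
move=> w _.
apply: le_trans (proj2 (hK x0) N w) _.
have Kle : Kf x0 <= 1 + \sum_x Kf x.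
  rewrite (bigD1 x0) //=.
  have : 0 <= \sum_(x | x != x0) Kf x by apply: sumr_ge0 => x _; case: (hK x).
  lra.
exact: ler_wpM2r.
Qed.
Lemma mxword_cat n (A : 'I_m -> 'M[C]_n) (s1 s2 : seq 'I_m) :
  mxword A (s1 ++ s2) = mxword A s1 *m mxword A s2.
Proof.
elim: s1 => [|i s1 IH] /=; first by rewrite mul1mx.
by rewrite IH mulmxA.
Qed.

Lemma an_submult n (rho : mx_representation C [set: gT]%G n) p q :
  an rho (p + q) <= an rho p * an rho q.
Proof.
rewrite /an; apply/bigmax_leP; split.
  by rewrite mulr_ge0 // -/(an rho p) -/(an rho q) an_ge0.
move=> w _.
have sz : size w = (p + q)%N by rewrite size_tuple.
have h1 : size (take p w) == p by rewrite size_takel // sz leq_addr.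
have h2 : size (drop p w) == q by rewrite size_drop sz addKn.
pose t1 : p.-tuple 'I_m := Tuple h1.
pose t2 : q.-tuple 'I_m := Tuple h2.
have -> : (w : seq 'I_m) = t1 ++ t2 by rewrite /= cat_take_drop.
rewrite mxword_cat !nrm_mxnorm.
apply: le_trans (nrm_mul _ _) _.
apply: ler_pM; rewrite ?nrm_ge0 //.
  exact: (le_bigmax _ (fun w : p.-tuple 'I_m => mxnorm (mxword (fun i => fourier (Q i) rho) w)) t1).
exact: (le_bigmax _ (fun w : q.-tuple 'I_m => mxnorm (mxword (fun i => fourier (Q i) rho) w)) t2).
Qed.

Lemma jsr_spec n (rho : mx_representation C [set: gT]%G n) :
  [/\ (fun N : nat => powR (an rho N) (N%:R^-1)) @ \oo --> jsr (fun i => fourier (Q i) rho),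
      forall N, (0 < N)%N -> jsr (fun i => fourier (Q i) rho) <= powR (an rho N) (N%:R^-1)
    & 0 <= jsr (fun i => fourier (Q i) rho)].
Proof.
have [L [cv le0 L0]] := fekete _ _ (an_ge0 _ rho) (an_submult _ rho).
have -> : jsr (fun i => fourier (Q i) rho) = L.
  exact: (cvg_lim _ cv).
by split.
Qed.
Lemma bigmax_ge0 (J : finType) (F : J -> R) : 0 <= \big[Num.max/0]_j F j.
Proof. by elim/big_rec: _ => // j x _ hx; rewrite le_max hx orbT. Qed.

Lemma powR_max (a c e : R) : 0 <= a -> 0 <= c -> 0 <= e ->
  powR (Num.max a c) e = Num.max (powR a e) (powR c e).
Proof.
move=> a0 c0 e0; case: (leP a c) => ac.
  have h : powR a e <= powR c e by apply: ge0_ler_powR; rewrite ?nnegrE.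
  by rewrite (max_r h).
have h : powR c e <= powR a e.
  by apply: ge0_ler_powR; rewrite ?nnegrE //; apply: ltW.
by rewrite (max_l h).
Qed.

Lemma powR_bigmax (J : finType) (F : J -> R) (e : R) : (forall j, 0 <= F j) -> 0 < e ->
  powR (\big[Num.max/0]_j F j) e = \big[Num.max/0]_j powR (F j) e.
Proof.
move=> F0 e0.
suff H : forall s : seq J, powR (\big[Num.max/0]_(j <- s) F j) e =
                           \big[Num.max/0]_(j <- s) powR (F j) e by apply: H.
elim => [|j s IH]; first by rewrite !big_nil powR0 // gt_eqF.
have s0 : 0 <= \big[Num.max/0]_(j <- s) F j.
  by elim/big_rec: _ => // i x _ hx; rewrite le_max hx orbT.
by rewrite !big_cons -IH (@powR_max _ _ e (F0 j) s0 (ltW e0)).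
Qed.
Lemma main_result :
  ((fun N : nat => powR (maxdev Q act N) (N%:R^-1)) @ \oo --> omegaX Q act)
  /\ (adversarial_mixing Q act <-> omegaX Q act < 1).
Proof.
have [I [W [simW sW Wsum]]] := decomp.
pose tau i := tauU (mxsimple_module (simW i)).
have memb i : [/\ mx_irreducible (tau i), ~ trivial_rep (tau i) & appears_in_CX act (tau i)].
  exact: (member _ (simW i) (sW i)).
have [Cu Cu0 up] := upper _ _ simW Wsum.
have lowi : forall i, exists c : R, 0 < c /\ forall N, an (tau i) N <= c * maxdev Q act N.
  move=> i; case: (memb i) => irr nt ap.
  by have [c c0 h] := @lower_bound _ (tau i) irr nt ap; exists c.
have [cf hcf] := boolp.choice lowi.
pose b N := \big[Num.max/0]_i an (tau i) N.
pose Cl := 1 + \sum_i cf i.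
have sc : 0 <= \sum_i cf i by apply: sumr_ge0 => i _; exact: ltW (proj1 (hcf i)).
have Cl0 : 0 < Cl by rewrite /Cl; lra.
have cfCl i : cf i <= Cl.
  rewrite /Cl (bigD1 i) //=.
  have : 0 <= \sum_(j | j != i) cf j by apply: sumr_ge0 => j _; exact: ltW (proj1 (hcf j)).
  lra.
have lowb N : b N <= Cl * maxdev Q act N.
  apply/bigmax_leP; split; first by rewrite mulr_ge0 ?maxdev_ge0 ?ltW.
  move=> i _; apply: le_trans (proj2 (hcf i) N) _.
  by apply: ler_wpM2r; [exact: maxdev_ge0 | exact: cfCl].
pose Lf i := jsr (fun j => fourier (Q j) (tau i)).
pose M := \big[Num.max/0]_i Lf i.
have Lfi0 i : 0 <= Lf i by case: (jsr_spec _ (tau i)).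
have cvb : (fun N => powR (b N) (N%:R^-1)) @ \oo --> M.
  rewrite -(cvg_shiftS (fun N => powR (b N) (N%:R^-1))) /=.
  have -> : (fun N => powR (b N.+1) (N.+1%:R^-1)) =
      (fun N => \big[Num.max/0]_i powR (an (tau i) N.+1) (N.+1%:R^-1)).
    apply: funext => N; rewrite /b powR_bigmax ?invr_gt0 ?ltr0n //.
    by move=> i; exact: an_ge0.
  rewrite (cvg_shiftS (fun N => \big[Num.max/0]_i powR (an (tau i) N) (N%:R^-1))).
  apply: cvg_bigmax => i; by case: (jsr_spec _ (tau i)).
have cvmd : (fun N => powR (maxdev Q act N) (N%:R^-1)) @ \oo --> M.
  have iCl0 : 0 < Cl^-1 by rewrite invr_gt0.
  apply: (powR_sandwich _ _ _ _ _ _ iCl0 Cu0 _ _ _ cvb).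
  - by move=> N; exact: bigmax_ge0.
  - by move=> N; rewrite ler_pdivrMl //; exact: lowb.
  - exact: up.
have M0 : 0 <= M by exact: bigmax_ge0.
have ubS : forall n (rho : mx_representation C [set: gT]%G n), mx_irreducible rho ->
    ~ trivial_rep rho -> appears_in_CX act rho -> jsr (fun j => fourier (Q j) rho) <= M.
  move=> n rho irr nt ap; have [c c0 h] := @lower_bound _ rho irr nt ap.
  have [cv _ _] := jsr_spec _ rho.
  apply: (powR_cmp _ _ _ (c * Cu) _ _ _ _ _ cv cvb).
  - by rewrite mulr_gt0.
  - by move=> N; exact: an_ge0.
  - move=> N; apply: le_trans (h N) _; rewrite -mulrA; apply: ler_wpM2l; first exact: ltW.
    exact: up.
have Mform : (exists i, M = Lf i) \/ M = 0.
  case: (pickP (fun _ : I => true)) => [i0 _ | hI]; last by right; rewrite /M big_pred0.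
  left; exists [arg max_(i > i0) Lf i]%O.
  by rewrite /M (bigmax_eq_arg _ i0) // => i _; exact: Lfi0.
have omegaM : omegaX Q act = M.
  rewrite /omegaX; set S := [set r | _].
  have Sub : forall r, S r -> r <= M by move=> r [n1 [rho1 [irr1 nt1 ap1 ->]]]; exact: ubS.
  have Sge0 : forall r, S r -> 0 <= r by move=> r [n1 [rho1 [_ _ _ ->]]]; case: (jsr_spec _ rho1).
  have [[r Sr]|nS] := pselect (exists r, S r).
    have hs : has_sup S by split; [exists r | exists M => x; exact: Sub].
    apply/eqP; rewrite eq_le; apply/andP; split.
      by apply: ge_sup; [exists r | move=> x; exact: Sub].
    case: Mform => [[i ->]|->].
      apply: sup_upper_bound => //.
      exists (\rank (W i)), (tau i); case: (memb i) => irr nt ap; by split.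
    by apply: le_trans (Sge0 _ Sr) (sup_upper_bound hs Sr).
  have -> : S = set0.
    by apply: funext => x; apply: propext; split => // Sx; apply: nS; exists x.
  rewrite sup0; case: Mform => [[i ->]|-> //].
  exfalso; apply: nS; exists (Lf i); exists (\rank (W i)), (tau i).
  by case: (memb i) => irr nt ap; split.
rewrite omegaM; split => //; split.
- move=> adv.
  case: Mform => [[i ->]|->]; last by rewrite ltr01.
  have [c0 hc] := hcf i.
  have cv0 : (fun N => cf i * maxdev Q act N) @ \oo --> 0.
    by rewrite -(mulr0 (cf i)); apply: cvgMr; exact: adv.
  have ev : \forall N \near \oo, (0 < N)%N /\ cf i * maxdev Q act N < 1.
    near=> N; split; first by near: N; exact: nbhs_infty_ge.
    by near: N; exact: (cvgr_lt _ cv0 _ ltr01).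
  have [N [N0 hN]] := filter_ex ev.
  have [_ le _] := jsr_spec _ (tau i).
  apply: le_lt_trans (le N N0) _.
  have aN : an (tau i) N < 1 by apply: le_lt_trans (hc N) hN.
  have e1 : powR 1 (N%:R^-1) = 1 :> R by rewrite powR1.
  rewrite -[X in _ < X]e1 gt0_ltr_powR ?nnegrE ?an_ge0 ?invr_gt0 ?ltr0n //.
- move=> M1; rewrite /adversarial_mixing.
  pose r := (1 + M) / 2.
  have r0 : 0 <= r by rewrite /r; lra.
  have r1 : r < 1 by rewrite /r; lra.
  have Mr : M < r by rewrite /r; lra.
  apply: (@squeeze_cvgr _ _ _ _ (fun=> 0) (fun N => r ^+ N)).
  + near=> N; apply/andP; split; first exact: maxdev_ge0.
    have N0 : (0 < N)%N by near: N; exact: nbhs_infty_ge.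
    rewrite -(pow_powR_inv _ _ _ (maxdev_ge0 N) N0).
    rewrite ler_pXn2r ?nnegrE ?powR_ge0 //.
    by near: N; exact: (cvgr_le _ cvmd _ Mr).
  + by apply: cvg_cst.
  + by have := @cvg_expr R r; rewrite ger0_norm //; apply.
Unshelve. all: by end_near.
Qed.

End Alg.

Theorem theorem1p6 (R : realType) (gT : finGroupType) (X : finType)
  (act : gT -> X -> X) (m : nat) (Q : 'I_m -> gT -> R) :
  (0 < #|X|)%N ->
  (forall x, act 1%g x = x) ->
  (forall g h x, act (g * h)%g x = act g (act h x)) ->
  (forall x y : X, exists g, act g x = y) ->
  (0 < m)%N ->
  (forall i, is_prob (Q i)) ->
  ((fun N : nat => powR (maxdev Q act N) (N%:R^-1)) @ \oo --> omegaX Q act)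
  /\ (adversarial_mixing Q act <-> omegaX Q act < 1).
Proof.
move=> X0 a1 aM tr m0 Qp.
have Qs : forall i, \sum_g Q i g = 1 by move=> i; case: (Qp i).
exact: (@main_result R gT X act a1 aM m Q tr X0 Qs).
Qed.
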